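(* Let $\zeta\in(0,1]$, $\beta\ge0$, $\lambda\ge0$, $p\in(0,1]$, and integers $\tau_n\ge1$, $D_n\ge1$. Define $V(1,\tau)=\beta$ for $0\le\tau<\tau_n$ and $V(1,\tau)=p\beta$ for $\tau_n\le\tau<\tau_n+D_n$, and define $V(0,\tau)$ for $0\le\tau\le\tau_n+D_n$ by $V(0,0)=0$, $$V(0,\tau)=\max\big\{V(0,\tau-1),\,-\lambda+\zeta V(1,\tau-1)+(1-\zeta)V(0,\tau-1)\big\}\quad (1\le\tau\le\tau_n+D_n,\ \tau\ne\tau_n+1),$$ $$V(0,\tau_n+1)=\max\big\{pV(0,\tau_n),\,-\lambda+\zeta V(1,\tau_n)+(1-\zeta)pV(0,\tau_n)\big\}.$$ (A) Suppose $\zeta\beta>\lambda$ and set $c=\dfrac{\lambda}{(\zeta\beta-\lambda)(1-\zeta)^{\tau_n}+\lambda}$. (i) If $p>c$, then for all $1\le w\le D_n$, $$V(0,\tau_n+w)=-(1-p)\frac{1-(1-\zeta)^{w}}{\zeta}\lambda+p\,\frac{1-(1-\zeta)^{\tau_n+w}}{\zeta}(\zeta\beta-\lambda),$$ and for each such $w$ the maximum defining $V(0,\tau_n+w)$ is attained by the second (''transmit'') option. (ii) If $p\le c$, then for all $1\le w\le D_n$, $V(0,\tau_n+w)=p\,\frac{1-(1-\zeta)^{\tau_n}}{\zeta}(\zeta\beta-\lambda)$; if moreover $p<c$, then for each such $w$ the second option is strictly smaller than the first (''do not transmit'') option. (B) If $\zeta\beta\le\lambda$, then $V(0,\tau_n+w)=0$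 for all $1\le w\le D_n$, and if $\zeta\beta<\lambda$ the second option is strictly smaller than the first at every $\tau\in\{1,\dots,\tau_n+D_n\}$.
   Context: This is the single-packet dynamic program for a predicted arrival of a user under imperfect prediction, with static channel (success probability $\zeta$ per transmission) and binary resource levels $\{0,1\}$. A predicted packet enters the prediction window $D_n$ slots before its actual arrival and has deadline $\tau_n$ after arrival; $\tau$ is the number of slots remaining until the deadline (so $\tau>\tau_n$ means the packet is still only predicted). Each prediction is correct with probability $p$ (true-positive rate), which is revealed when the packet's arrival time comes; $\beta$ is the delivery reward and $\lambda$ the cost per transmission. In each max, the first option is not transmitting and the second is transmitting. *)

(* Defs.v *)
From Stdlib Require Import Reals Arith.
Open Scope R_scope.

Definition V1 (beta p : R) (taun : nat) (tau : nat) : R :=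
  if Nat.ltb tau taun then beta else p * beta.

(* The "continuation" value of V(0, t) as it enters the step to tau = t+1:
   at tau = taun+1 (i.e. t = taun) the prediction is resolved and the
   value is multiplied by p. *)
Definition wait_val (p : R) (taun : nat) (t : nat) (v : R) : R :=
  if Nat.eqb t taun then p * v else v.

Definition tx_val (zeta beta lambda p : R) (taun : nat) (t : nat) (v : R) : R :=
  - lambda + zeta * V1 beta p taun t + (1 - zeta) * wait_val p taun t v.

Fixpoint V0 (zeta beta lambda p : R) (taun : nat) (tau : nat) : R :=
  match tau with
  | O => 0
  | S t => Rmax (wait_val p taun t (V0 zeta beta lambda p taun t))
                (tx_val zeta beta lambda p taun t (V0 zeta beta lambda p taun t))
  end.

(* The two options in the max defining V(0,tau), for tau >= 1:
   first = not transmitting, second = transmitting. *)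
Definition wait_opt (zeta beta lambda p : R) (taun : nat) (tau : nat) : R :=
  wait_val p taun (pred tau) (V0 zeta beta lambda p taun (pred tau)).

Definition tx_opt (zeta beta lambda p : R) (taun : nat) (tau : nat) : R :=
  tx_val zeta beta lambda p taun (pred tau) (V0 zeta beta lambda p taun (pred tau)).

(* Main.v *)
Require Import Defs.
From Stdlib Require Import Reals Arith Lra Lia Psatz.
Open Scope R_scope.

Lemma V0_S z b l p n t : V0 z b l p n (S t) =
  Rmax (wait_val p n t (V0 z b l p n t)) (tx_val z b l p n t (V0 z b l p n t)).
Proof. reflexivity. Qed.

Lemma before p b n t v : (t < n)%nat -> wait_val p n t v = v /\ V1 b p n t = b.
Proof. intros H. unfold wait_val, V1.
  rewrite (proj2 (Nat.ltb_lt t n) H). rewrite (proj2 (Nat.eqb_neq t n)) by lia. auto. Qed.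

Lemma atn p b n v : wait_val p n n v = p * v /\ V1 b p n n = p * b.
Proof. unfold wait_val, V1. rewrite Nat.eqb_refl, Nat.ltb_irrefl. auto. Qed.

Lemma after p b n t v : (n < t)%nat -> wait_val p n t v = v /\ V1 b p n t = p * b.
Proof. intros H. unfold wait_val, V1.
  rewrite (proj2 (Nat.ltb_ge t n)) by lia. rewrite (proj2 (Nat.eqb_neq t n)) by lia. auto. Qed.

Lemma pre_pos z b l p n : 0 < z <= 1 -> z * b - l > 0 ->
  forall t, (t <= n)%nat -> V0 z b l p n t = (1 - (1 - z) ^ t) / z * (z * b - l).
Proof.
  intros Hz Ha t. induction t as [|t IH]; intros Ht.
  - simpl. field. lra.
  - rewrite V0_S. destruct (before p b n t (V0 z b l p n t)) as [E1 E2]; [lia|].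
    unfold tx_val. rewrite E1, E2, IH by lia.
    assert (Hq : 0 <= (1 - z) ^ t) by (apply pow_le; lra).
    change ((1 - z) ^ S t) with ((1 - z) * (1 - z) ^ t).
    rewrite Rmax_right.
    + field. lra.
    + assert (E : - l + z * b + (1 - z) * ((1 - (1 - z) ^ t) / z * (z * b - l))
                 - (1 - (1 - z) ^ t) / z * (z * b - l) = (1 - z) ^ t * (z * b - l))
        by (field; lra). nra.
Qed.

Lemma pre_neg z b l p n : 0 < z <= 1 -> z * b - l <= 0 ->
  forall t, (t <= n)%nat -> V0 z b l p n t = 0.
Proof.
  intros Hz Ha t. induction t as [|t IH]; intros Ht.
  - reflexivity.
  - rewrite V0_S. destruct (before p b n t (V0 z b l p n t)) as [E1 E2]; [lia|].
    unfold tx_val. rewrite E1, E2, IH by lia. apply Rmax_left. lra.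
Qed.

Lemma allzero z b l p n : 0 < z <= 1 -> 0 <= b -> 0 < p <= 1 -> z * b - l <= 0 ->
  forall t, V0 z b l p n t = 0.
Proof.
  intros Hz Hb Hp Ha t. induction t as [|t IH].
  - reflexivity.
  - rewrite V0_S. unfold tx_val. rewrite IH.
    assert (HW0 : wait_val p n t 0 = 0) by (unfold wait_val; destruct (Nat.eqb t n); ring).
    assert (HV1 : z * V1 b p n t <= z * b) by (unfold V1; destruct (Nat.ltb t n); [lra| ]; apply Rmult_le_compat_l; nra).
    rewrite HW0. apply Rmax_left. lra.
Qed.

Theorem theorem3 (zeta beta lambda p : R) (taun Dn : nat) :
  0 < zeta <= 1 -> 0 <= beta -> 0 <= lambda -> 0 < p <= 1 ->
  (1 <= taun)%nat -> (1 <= Dn)%nat ->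
  (zeta * beta > lambda ->
     let c := lambda / ((zeta * beta - lambda) * (1 - zeta) ^ taun + lambda) in
     (p > c ->
        forall w : nat, (1 <= w <= Dn)%nat ->
          V0 zeta beta lambda p taun (taun + w) =
            - (1 - p) * ((1 - (1 - zeta) ^ w) / zeta) * lambda
            + p * ((1 - (1 - zeta) ^ (taun + w)) / zeta) * (zeta * beta - lambda)
          /\ V0 zeta beta lambda p taun (taun + w) =
               tx_opt zeta beta lambda p taun (taun + w)) /\
     (p <= c ->
        (forall w : nat, (1 <= w <= Dn)%nat ->
          V0 zeta beta lambda p taun (taun + w) =
            p * ((1 - (1 - zeta) ^ taun) / zeta) * (zeta * beta - lambda)) /\
        (p < c ->
          forall w : nat, (1 <= w <= Dn)%nat ->
            tx_opt zeta beta lambda p taun (taun + w)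
              < wait_opt zeta beta lambda p taun (taun + w)))) /\
  (zeta * beta <= lambda ->
     (forall w : nat, (1 <= w <= Dn)%nat ->
        V0 zeta beta lambda p taun (taun + w) = 0) /\
     (zeta * beta < lambda ->
        forall tau : nat, (1 <= tau <= taun + Dn)%nat ->
          tx_opt zeta beta lambda p taun tau
            < wait_opt zeta beta lambda p taun tau)).
Proof.
  intros Hz Hb Hl Hp Hn HD. split.
  - intros Ha c.
    set (Q := (1 - zeta) ^ taun).
    assert (HQ : 0 <= Q) by (apply pow_le; lra).
    set (a := zeta * beta - lambda).
    set (A := (1 - (1 - zeta) ^ taun) / zeta * a).
    set (K := - lambda + p * (lambda + a * Q)).
    assert (HV0n : V0 zeta beta lambda p taun taun = A)
      by (apply pre_pos; [lra|lra|lia]).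
    assert (Hd1 : tx_val zeta beta lambda p taun taun A - wait_val p taun taun A = K).
    { unfold tx_val. destruct (atn p beta taun A) as [E1 E2]. rewrite E1, E2.
      unfold K, A, Q, a. field. lra. }
    assert (HaQ : 0 <= a * Q) by (unfold a; nra).
    split.
    + intros Hpc.
      assert (HK : 0 <= K).
      { destruct (Req_dec (a * Q + lambda) 0) as [D0|D0].
        - unfold K. nra.
        - assert (Dp : 0 < a * Q + lambda) by lra.
          unfold c in Hpc. fold a Q in Hpc.
          assert (lambda / (a * Q + lambda) * (a * Q + lambda) = lambda) by (field; lra).
          assert (p * (a * Q + lambda) > lambda / (a * Q + lambda) * (a * Q + lambda))
            by (apply Rmult_gt_compat_r; lra).
          unfold K. nra. }
      set (B := fun w : nat => - (1 - p) * ((1 - (1 - zeta) ^ w) / zeta) * lambda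
            + p * ((1 - (1 - zeta) ^ (taun + w)) / zeta) * a).
      assert (Main : forall k, V0 zeta beta lambda p taun (taun + S k) = B (S k) /\
                 wait_opt zeta beta lambda p taun (taun + S k)
                 <= tx_opt zeta beta lambda p taun (taun + S k)).
      { induction k as [|k IH].
        - rewrite Nat.add_1_r. unfold wait_opt, tx_opt. simpl pred. rewrite V0_S, HV0n.
          split; [|lra]. rewrite Rmax_right by lra.
          unfold tx_val. destruct (atn p beta taun A) as [E1 E2]. rewrite E1, E2.
          unfold B, A, a. rewrite Nat.add_1_r.
          change ((1 - zeta) ^ S taun) with ((1 - zeta) * (1 - zeta) ^ taun). simpl pow.
          field. lra.
        - destruct IH as [IH1 _].
          assert (Hdk : tx_val zeta beta lambda p taun (taun + S k) (B (S k))
                        - wait_val p taun (taun + S k) (B (S k)) = (1 - zeta) ^ S k * K).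
          { unfold tx_val. destruct (after p beta taun (taun + S k) (B (S k))) as [E1 E2]; [lia|].
            rewrite E1, E2. unfold B, K, Q, a. rewrite pow_add.
            change ((1 - zeta) ^ S k) with ((1 - zeta) * (1 - zeta) ^ k).
            field. lra. }
          assert (0 <= (1 - zeta) ^ S k) by (apply pow_le; lra).
          assert (0 <= (1 - zeta) ^ S k * K) by nra.
          rewrite Nat.add_succ_r. unfold wait_opt, tx_opt. simpl pred.
          rewrite V0_S, IH1. split; [|lra].
          rewrite Rmax_right by lra.
          unfold tx_val. destruct (after p beta taun (taun + S k) (B (S k))) as [E1 E2]; [lia|].
          rewrite E1, E2. unfold B, a. rewrite !pow_add.
          change ((1 - zeta) ^ S (S k)) with ((1 - zeta) * (1 - zeta) ^ (S k)).
          field. lra. }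
      intros w Hw. destruct w as [|k]; [lia|].
      destruct (Main k) as [M1 M2]. split; [exact M1|].
      rewrite Nat.add_succ_r in *. rewrite V0_S.
      unfold wait_opt, tx_opt in *. simpl pred in *.
      apply Rmax_right. exact M2.
    + intros Hpc.
      assert (D0 : a * Q + lambda <> 0).
      { intro D0. unfold c in Hpc. fold a Q in Hpc. rewrite D0 in Hpc.
        unfold Rdiv in Hpc. rewrite Rinv_0 in Hpc. lra. }
      assert (Dp : 0 < a * Q + lambda) by lra.
      assert (Ec : lambda / (a * Q + lambda) * (a * Q + lambda) = lambda) by (field; lra).
      unfold c in Hpc. fold a Q in Hpc.
      assert (HK : K <= 0).
      { assert (p * (a * Q + lambda) <= lambda / (a * Q + lambda) * (a * Q + lambda))
          by (apply Rmult_le_compat_r; lra). unfold K. nra. }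
      assert (Main : forall k, V0 zeta beta lambda p taun (taun + S k) = p * A /\
                 tx_opt zeta beta lambda p taun (taun + S k)
                 - wait_opt zeta beta lambda p taun (taun + S k) = K).
      { induction k as [|k IH].
        - rewrite Nat.add_1_r. unfold wait_opt, tx_opt. simpl pred. rewrite V0_S, HV0n.
          split; [|lra]. rewrite Rmax_left by lra.
          destruct (atn p beta taun A) as [E1 E2]. exact E1.
        - destruct IH as [IH1 _].
          assert (Hdk : tx_val zeta beta lambda p taun (taun + S k) (p * A)
                        - wait_val p taun (taun + S k) (p * A) = K).
          { unfold tx_val. destruct (after p beta taun (taun + S k) (p * A)) as [E1 E2]; [lia|].
            rewrite E1, E2. unfold K, A, Q, a. field. lra. }
          rewrite Nat.add_succ_r. unfold wait_opt, tx_opt. simpl pred.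
          rewrite V0_S, IH1. split; [|lra].
          rewrite Rmax_left by lra.
          destruct (after p beta taun (taun + S k) (p * A)) as [E1 E2]; [lia|]. exact E1. }
      split.
      * intros w Hw. destruct w as [|k]; [lia|]. destruct (Main k) as [M1 _].
        rewrite M1. unfold A, a. unfold Q. field. lra.
      * intros Hlt w Hw. destruct w as [|k]; [lia|]. destruct (Main k) as [_ M2]. unfold c in Hlt. fold a Q in Hlt.
        assert (p * (a * Q + lambda) < lambda / (a * Q + lambda) * (a * Q + lambda))
          by (apply Rmult_lt_compat_r; lra). assert (HK2 : K < 0) by (unfold K; nra). lra.
  - intros Ha. split.
    + intros w Hw. apply allzero; lra.
    + intros Hlt tau Ht. destruct tau as [|t]; [lia|].
      unfold tx_opt, wait_opt. simpl pred. rewrite allzero by lra.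
      unfold tx_val.
      assert (HW0 : wait_val p taun t 0 = 0) by (unfold wait_val; destruct (Nat.eqb t taun); ring).
      assert (HV1 : zeta * V1 beta p taun t <= zeta * beta) by (unfold V1; destruct (Nat.ltb t taun); [lra| ]; apply Rmult_le_compat_l; nra).
      rewrite HW0. lra.
Qed.
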